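(* Let $0<\alpha\le1$, $\delta>0$ and $\bar u\in L^2(\Omega)^d$. For every integer $j\ge0$, the $j$-th Mitlar iterate $u_j$ computed from the data $\bar u$ satisfies $$u_j=D_\alpha\sum_{i=0}^{j}\big(\alpha D_\alpha(I-G)\big)^i\,\bar u .$$
   Context: Let $\Omega\subset\mathbb{R}^n$ be a regular, bounded, polyhedral domain, $d\ge1$, $X=H^1_0(\Omega)^d$, and $(\cdot,\cdot)$ the $L^2(\Omega)^d$ inner product. The differential filter $G:L^2(\Omega)^d\to X$ with filter radius $\delta>0$ is defined by $Gu=\bar u$, where $\bar u\in X$ is the unique solution of $\delta^2(\nabla\bar u,\nabla v)+(\bar u,v)=(u,v)$ for all $v\in X$; it is regarded as a bounded self-adjoint operator on $L^2(\Omega)^d$. For $\alpha\in(0,1]$ let $D_\alpha=[(1-\alpha)G+\alpha I]^{-1}$. Mitlar with data $\bar u$: $u_0$ solves $[(1-\alpha)G+\alpha I]u_0=\bar u$, and for $j\ge1$, $u_j$ solves $[(1-\alpha)G+\alpha I](u_j-u_{j-1})=\bar u-Gu_{j-1}$. *)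

(* Defs.v *)
From mathcomp Require Import all_boot all_order all_algebra.
Set Implicit Arguments. Unset Strict Implicit. Unset Printing Implicit Defensive.
Import Order.TTheory GRing.Theory Num.Theory.
Local Open Scope ring_scope.

Definition Mop (R : realFieldType) (V : lmodType R) (alpha : R)
  (G : V -> V) (v : V) : V :=
  (1 - alpha) *: G v + alpha *: v.

Definition is_Dalpha (R : realFieldType) (V : lmodType R) (alpha : R)
  (G : V -> V) (D : V -> V) : Prop :=
  cancel D (Mop alpha G) /\ cancel (Mop alpha G) D.

Definition is_mitlar (R : realFieldType) (V : lmodType R) (alpha : R)
  (G : V -> V) (ubar : V) (u : nat -> V) : Prop :=
  Mop alpha G (u 0%N) = ubar /\
  forall j : nat, Mop alpha G (u j.+1 - u j) = ubar - G (u j).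

Definition Top (R : realFieldType) (V : lmodType R) (alpha : R)
  (G D : V -> V) (v : V) : V :=
  alpha *: D (v - G v).

(* Main.v *)
Require Import Defs.
From mathcomp Require Import all_boot all_order all_algebra.
Import Order.TTheory GRing.Theory Num.Theory.
Local Open Scope ring_scope.

Theorem mainTheorem4 (R : realFieldType) (V : lmodType R)
  (G : {linear V -> V}) (D : V -> V) (alpha : R)
  (halpha0 : 0 < alpha) (halpha1 : alpha <= 1)
  (hD : is_Dalpha alpha G D)
  (ubar : V) (u : nat -> V) (hu : is_mitlar alpha G ubar u) :
  forall j : nat,
    u j = D (\sum_(i < j.+1) iter i (Top alpha G D) ubar).
Proof.
case: hD => DK MK; case: hu => hu0 huS.
have MB : forall x y, Mop alpha G (x - y) = Mop alpha G x - Mop alpha G y.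
  move=> x y; rewrite /Mop linearB !scalerBr opprD !addrA; congr (_ + _).
  by rewrite -!addrA; congr (_ + _); rewrite addrC.
have Minj : injective (Mop alpha G) by apply: (can_inj MK).
have DB : forall x y, D (x - y) = D x - D y.
  by move=> x y; apply: Minj; rewrite MB !DK.
have D0 : D 0 = 0.
  by have := DB 0 0; rewrite subrr => ->; rewrite subrr.
have DN : forall x, D (- x) = - D x by move=> x; rewrite -sub0r DB D0 sub0r.
have DD : forall x y, D (x + y) = D x + D y.
  by move=> x y; have := DB x (- y); rewrite opprK DN opprK.
have DG : forall x, D (G x) = G (D x).
  move=> x; apply: Minj; rewrite DK -{1}(DK x) /Mop.
  by rewrite linearD !linearZ.
have TE : forall x, Top alpha G D x = x - G (D x).
  move=> x; rewrite /Top DB DG scalerBr.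
  have := DK x; rewrite /Mop => E.
  transitivity ((1 - alpha) *: G (D x) + alpha *: D x - G (D x)); last by rewrite E.
  rewrite scalerBl scale1r.
  set a := alpha *: D x; set b := G (D x); set c := alpha *: b.
  by rewrite addrAC [b - c - b]addrAC subrr sub0r addrC.
pose S j := \sum_(i < j.+1) iter i (Top alpha G D) ubar.
have inv : forall j, ubar - G (D (S j)) = iter j.+1 (Top alpha G D) ubar.
  elim=> [|j IH]; first by rewrite /S big_ord1 /= TE.
  rewrite /S big_ord_recr /= DD linearD opprD addrA.
  rewrite -/(S j) IH /=.
  by rewrite [in RHS]TE.
elim=> [|j IH].
  by rewrite big_ord1 /=; apply: Minj; rewrite DK.
have E : u j.+1 - u j = D (ubar - G (u j)) by apply: Minj; rewrite DK.
rewrite -(subrK (u j) (u j.+1)) E IH -/(S j) inv.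
by rewrite big_ord_recr /= DD addrC.
Qed.
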